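(* Let $m\in\mathbb{N}$, $d_1,\dots,d_m\in\mathbb{R}$, $\alpha_1,\dots,\alpha_m>0$, $\beta>0$ and $\nu\in\mathbb{R}$. Let $\gamma$ be a real root of the characteristic equation $$\sum_{i=1}^{m}\frac{d_i\,\Gamma(1+\gamma)}{\Gamma(1+\gamma-\alpha_i)}=\nu^2,$$ and suppose there is no positive integer $k$ such that $\gamma+\beta k$ is also a root of this equation. Then, for any constant $c_0$, the series $$u(x)=c_0\sum_{n=0}^{\infty}\frac{(-1)^n x^{\gamma+\beta n}}{\displaystyle\prod_{k=1}^{n}\left(\sum_{i=1}^{m}\frac{d_i\,\Gamma(1+\gamma+\beta k)}{\Gamma(1+\gamma+\beta k-\alpha_i)}-\nu^2\right)}$$ (where the empty product for $n=0$ equals $1$) converges pointwise for every $x>0$.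
   Context: This series is the candidate fractional power series solution of the generalized fractional Bessel equation $\sum_{i=1}^{m}d_i x^{\alpha_i}D^{\alpha_i}u(x)+(x^\beta-\nu^2)u(x)=0$, $x>0$, where $D^{\alpha}$ is the Caputo derivative: for $n-1<\alpha<n$, $n\in\mathbb{N}$, $D^{\alpha}u(x)=\frac{1}{\Gamma(n-\alpha)}\int_0^x (x-t)^{n-\alpha-1}u^{(n)}(t)\,dt$, and for $\alpha=n\in\mathbb{N}$ it is the ordinary derivative $u^{(n)}$. Quotients $\Gamma(a)/\Gamma(b)$ are understood with $1/\Gamma$ as an entire function, vanishing at the nonpositive integers. *)

(* Defs.v *)
From Stdlib Require Import Reals.
From Coquelicot Require Import Coquelicot.
Open Scope R_scope.

(* sum_{i=0}^{m-1} f i  (the paper's sum_{i=1}^m, indices shifted by one) *)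
Fixpoint sum_upto (m : nat) (f : nat -> R) : R :=
  match m with O => 0 | S m' => sum_upto m' f + f m' end.

Fixpoint prod_1n (n : nat) (f : nat -> R) : R :=
  match n with O => 1 | S n' => prod_1n n' f * f (S n') end.

Definition prod_0n (n : nat) (f : nat -> R) : R := prod_1n n f * f O.

(* Reciprocal Gamma function 1/Gamma, an entire function, via the
   Euler--Gauss product: 1/Gamma(x) = lim_n x(x+1)...(x+n) / (n! n^x).
   It vanishes exactly at the nonpositive integers. *)
Definition rgamma (x : R) : R :=
  real (Lim_seq (fun n => prod_0n n (fun k => x + INR k)
                          / (INR (Factorial.fact n) * Rpower (INR n) x))).

(* Gamma(a)/Gamma(b) := Gamma(a) * (1/Gamma)(b).  When a is a pole of Gamma
   (rgamma a = 0) the quotient is set to 0 by convention. *)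
Definition gamma_ratio (a b : R) : R :=
  if Req_EM_T (rgamma a) 0 then 0 else rgamma b / rgamma a.

Definition char_lhs (m : nat) (d alpha : nat -> R) (g : R) : R :=
  sum_upto m (fun i => d i * gamma_ratio (1 + g) (1 + g - alpha i)).

Definition bessel_term (m : nat) (d alpha : nat -> R) (beta nu g x : R)
  (n : nat) : R :=
  (-1) ^ n * Rpower x (g + beta * INR n)
  / prod_1n n (fun k => char_lhs m d alpha (g + beta * INR k) - nu ^ 2).

(* Main.v *)
Require Import Defs.
From Stdlib Require Import Reals Lra Lia List.
From Coquelicot Require Import Coquelicot.
Open Scope R_scope.

Lemma ln_le_sub1 y : 0 < y -> ln y <= y - 1.
Proof.
  intro Hy. destruct (Req_dec (ln y) 0) as [E|E].
  - rewrite E. assert (y = 1). { rewrite <- (exp_ln y Hy), E. apply exp_0. } lra.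
  - pose proof (exp_ineq1 _ E). rewrite exp_ln in H; lra.
Qed.

Lemma ln_ge_1inv y : 0 < y -> 1 - / y <= ln y.
Proof.
  intro Hy. pose proof (ln_le_sub1 (/ y) (Rinv_0_lt_compat _ Hy)).
  rewrite ln_Rinv in H by lra. lra.
Qed.

Fixpoint sum_1n (n : nat) (f : nat -> R) : R :=
  match n with O => 0 | S n' => sum_1n n' f + f (S n') end.

Definition Hs n x := sum_1n n (fun k => ln (1 + x / INR k)).

Lemma prod_1n_exp x n : 0 < x ->
  prod_1n n (fun k => x + INR k) = INR (Factorial.fact n) * exp (Hs n x).
Proof.
  intro Hx. induction n as [|n IH].
  - simpl. unfold Hs; simpl. rewrite exp_0. ring.
  - cbn [prod_1n]. rewrite IH. unfold Hs. cbn [sum_1n]. fold (Hs n x).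
    rewrite exp_plus. rewrite exp_ln.
    2:{ assert (0 < x / INR (S n)). { apply Rdiv_lt_0_compat; auto. apply lt_0_INR, Nat.lt_0_succ. } lra. }
    rewrite fact_simpl, mult_INR.
    assert (0 < INR (S n)) by (apply lt_0_INR, Nat.lt_0_succ). field. lra.
Qed.

Definition pseq (x : R) (n : nat) : R :=
  prod_0n n (fun k => x + INR k) / (INR (Factorial.fact n) * Rpower (INR n) x).

Lemma pseq_exp x n : 0 < x -> (1 <= n)%nat ->
  pseq x n = x * exp (Hs n x - x * ln (INR n)).
Proof.
  intros Hx Hn. unfold pseq, prod_0n. rewrite prod_1n_exp by auto.
  unfold Rpower. rewrite Rminus_def, exp_plus, exp_Ropp.
  simpl INR at 2. rewrite Rplus_0_r.
  assert (0 < INR (Factorial.fact n)) by (apply lt_0_INR, Factorial.lt_O_fact).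
  assert (0 < exp (x * ln (INR n))) by apply exp_pos.
  field. lra.
Qed.
Definition ak x k := ln (1 + x / INR k) - x * (ln (INR k + 1) - ln (INR k)).

Lemma sum_ak x n : sum_f_R0 (fun j => ak x (S j)) n = Hs (S n) x - x * ln (INR (S n) + 1).
Proof.
  induction n as [|n IH].
  - simpl. unfold ak, Hs. cbn [sum_1n]. simpl INR. rewrite ln_1. ring.
  - cbn [sum_f_R0]. rewrite IH. unfold ak, Hs. cbn [sum_1n]. fold (Hs (S n) x).
    rewrite (S_INR (S n)). ring.
Qed.

Lemma ak_bound x k : 0 < x -> (1 <= k)%nat ->
  Rabs (ak x k) <= (x + 2 * x * x) * (/ INR k - / (INR k + 1)).
Proof.
  intros Hx Hk. unfold ak.
  assert (HK : 1 <= INR k) by (apply (le_INR 1); auto).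
  set (K := INR k) in *.
  assert (E1 : ln (K + 1) - ln K = ln (1 + / K)).
  { rewrite <- ln_div by lra. f_equal. field. lra. }
  rewrite E1.
  pose proof (ln_le_sub1 (1 + x / K)) as U1.
  pose proof (ln_ge_1inv (1 + x / K)) as U2.
  pose proof (ln_le_sub1 (1 + / K)) as L1.
  pose proof (ln_ge_1inv (1 + / K)) as L2.
  assert (0 < x / K) by (apply Rdiv_lt_0_compat; lra).
  assert (0 < / K) by (apply Rinv_0_lt_compat; lra).
  specialize (U1 ltac:(lra)). specialize (U2 ltac:(lra)).
  specialize (L1 ltac:(lra)). specialize (L2 ltac:(lra)).
  replace (1 - / (1 + x / K)) with (x / (K + x)) in U2 by (field; lra).
  replace (1 - / (1 + / K)) with (/ (K + 1)) in L2 by (field; lra).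
  set (u := ln (1 + x / K)) in *. set (L := ln (1 + / K)) in *.
  assert (I1 : / K - / (K + 1) = / (K * (K + 1))) by (field; lra).
  assert (0 < / (K * (K + 1))) by (apply Rinv_0_lt_compat; nra).
  apply Rabs_le. split.
  -
    assert (x * L <= x * (/ K)) by (apply Rmult_le_compat_l; lra).
    assert (x / (K + x) - x * / K >= - (x + 2 * x * x) * (/ K - / (K + 1))).
    { rewrite I1. 
      replace (x / (K + x) - x * / K) with (- (x * x) / (K * (K + x))) by (field; lra).
      apply Rle_ge. unfold Rdiv.
      assert (0 < / (K * (K+x))) by (apply Rinv_0_lt_compat; nra).
      assert (/ (K * (K + x)) <= 2 * / (K * (K + 1))).
      { apply (Rmult_le_reg_r (K * (K + x) * (K * (K+1)))). { apply Rmult_lt_0_compat; nra. }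
        field_simplify; try lra. nra. }
      assert (0 <= x * x * (2 * / (K * (K + 1)) - / (K * (K + x)))) by (apply Rmult_le_pos; nra).
      assert (0 <= x * / (K * (K + 1))) by nra.
      nra. }
    lra.
  - assert (x * / (K + 1) <= x * L) by (apply Rmult_le_compat_l; lra).
    replace (x / K) with (x * / K) in * by reflexivity.
    assert (x * / K - x * / (K + 1) <= (x + 2 * x * x) * (/ K - / (K + 1))).
    { rewrite I1. replace (x * / K - x * / (K + 1)) with (x * / (K * (K + 1))) by (field; lra).
      nra. }
    lra.
Qed.

Lemma lim_invS : is_lim_seq (fun n => / INR (S n)) 0.
Proof.
  pose proof (is_lim_seq_inv INR p_infty is_lim_seq_INR ltac:(discriminate)) as H.
  simpl in H. apply (is_lim_seq_incr_1 (fun n => / INR n)). exact H.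
Qed.

Lemma lim_invSS : is_lim_seq (fun n => / (INR (S n) + 1)) 0.
Proof.
  apply (is_lim_seq_ext (fun n => / INR (S (S n)))).
  { intro n. rewrite (S_INR (S n)). reflexivity. }
  apply (is_lim_seq_incr_1 (fun n => / INR (S n))). exact lim_invS.
Qed.

Lemma tele n : sum_f_R0 (fun j => / INR (S j) - / (INR (S j) + 1)) n = 1 - / (INR (S n) + 1).
Proof.
  induction n as [|n IH].
  - simpl. field.
  - cbn [sum_f_R0]. rewrite IH. rewrite (S_INR (S n)). ring.
Qed.

Lemma ex_series_tele (C : R) : ex_series (fun j => C * (/ INR (S j) - / (INR (S j) + 1))).
Proof.
  exists (C * (1 - 0)).
  apply is_series_Reals. apply is_lim_seq_Reals.
  apply (is_lim_seq_ext (fun n => C * (1 - / (INR (S n) + 1)))).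
  { intro n. rewrite <- (tele n). clear. induction n as [|n IH]; cbn [sum_f_R0]; [ring|]. rewrite <- IH. ring. }
  apply is_lim_seq_mult'. apply is_lim_seq_const.
  apply is_lim_seq_minus'. apply is_lim_seq_const. apply lim_invSS.
Qed.

Lemma ex_series_ak x : 0 < x -> ex_series (fun j => ak x (S j)).
Proof.
  intro Hx. apply (@ex_series_le R_AbsRing R_CompleteNormedModule _ (fun j => (x + 2 * x * x) * (/ INR (S j) - / (INR (S j) + 1)))).
  - intro n. change (norm (ak x (S n))) with (Rabs (ak x (S n))). apply ak_bound; auto. lia.
  - apply ex_series_tele.
Qed.

Lemma lim_lndiff : is_lim_seq (fun n => ln (INR (S n) + 1) - ln (INR (S n))) 0.
Proof.
  apply (is_lim_seq_le_le (fun _ => 0) _ (fun n => / INR (S n))).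
  - intro n. assert (HK : 0 < INR (S n)) by (apply lt_0_INR, Nat.lt_0_succ).
    set (K := INR (S n)) in *.
    assert (E1 : ln (K + 1) - ln K = ln (1 + / K)).
    { rewrite <- ln_div by lra. f_equal. field. lra. }
    rewrite E1. assert (0 < / K) by (apply Rinv_0_lt_compat; lra).
    pose proof (ln_le_sub1 (1 + / K) ltac:(lra)).
    pose proof (ln_ge_1inv (1 + / K) ltac:(lra)).
    assert (0 < / (1 + / K)) by (apply Rinv_0_lt_compat; lra).
    assert (/ (1 + / K) <= 1).
    { rewrite <- Rinv_1 at 2. apply Rinv_le_contravar; lra. }
    lra.
  - apply is_lim_seq_const.
  - apply lim_invS.
Qed.

Lemma rg_lim x : 0 < x -> is_lim_seq (pseq x) (rgamma x) /\ 0 < rgamma x.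
Proof.
  intro Hx.
  set (S0 := Series (fun j => ak x (S j))).
  assert (HS : is_lim_seq (fun n => sum_f_R0 (fun j => ak x (S j)) n) S0).
  { apply is_lim_seq_Reals, is_series_Reals. apply Series_correct, ex_series_ak; auto. }
  assert (HL : is_lim_seq (pseq x) (x * exp (S0 + x * 0))).
  { apply is_lim_seq_incr_1.
    apply (is_lim_seq_ext (fun n => x * exp (sum_f_R0 (fun j => ak x (S j)) n
              + x * (ln (INR (S n) + 1) - ln (INR (S n)))))).
    { intro n. rewrite pseq_exp by (auto; lia). rewrite sum_ak. f_equal. f_equal. ring. }
    apply is_lim_seq_mult'. apply is_lim_seq_const.
    apply (is_lim_seq_continuous exp).
    { apply derivable_continuous_pt, derivable_pt_exp. }
    apply is_lim_seq_plus'. exact HS.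
    apply is_lim_seq_mult'. apply is_lim_seq_const. apply lim_lndiff. }
  assert (E : rgamma x = x * exp (S0 + x * 0)).
  { unfold rgamma. fold (pseq x). rewrite (is_lim_seq_unique _ _ HL). reflexivity. }
  split.
  - rewrite E. exact HL.
  - rewrite E. apply Rmult_lt_0_compat; auto. apply exp_pos.
Qed.

Lemma Hs_diff n t d : 0 < t -> 0 < d ->
  Hs n (t + d) - Hs n t <= d * (ln (INR n + t) - ln t).
Proof.
  intros Ht Hd. induction n as [|n IH].
  - unfold Hs. simpl. rewrite Rplus_0_l. lra.
  - unfold Hs in *. cbn [sum_1n].
    assert (HK : 0 <= INR n) by apply pos_INR.
    rewrite S_INR.
    set (K := INR n) in *.
    assert (E : ln (1 + (t + d) / (K + 1)) - ln (1 + t / (K + 1)) = ln (1 + d / (K + 1 + t))).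
    { rewrite <- ln_div.
      - f_equal. field. lra.
      - assert (0 < (t + d) / (K + 1)) by (apply Rdiv_lt_0_compat; lra). lra.
      - assert (0 < t / (K + 1)) by (apply Rdiv_lt_0_compat; lra). lra. }
    assert (0 < d / (K + 1 + t)) by (apply Rdiv_lt_0_compat; lra).
    pose proof (ln_le_sub1 (1 + d / (K + 1 + t)) ltac:(lra)).
    assert (E2 : ln (K + 1 + t) - ln (K + t) = ln ((K + 1 + t) / (K + t))).
    { rewrite ln_div; lra. }
    assert (0 < (K + 1 + t) / (K + t)) by (apply Rdiv_lt_0_compat; lra).
    pose proof (ln_ge_1inv ((K + 1 + t) / (K + t)) ltac:(lra)).
    replace (1 - / ((K + 1 + t) / (K + t))) with (/ (K + 1 + t)) in H2 by (field; lra).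
    assert (d / (K + 1 + t) <= d * (ln (K + 1 + t) - ln (K + t))).
    { rewrite E2. unfold Rdiv. apply Rmult_le_compat_l; lra. }
    lra.
Qed.

Lemma pseq_ratio t d n : 0 < t -> 0 < d -> (1 <= n)%nat -> t <= INR n ->
  pseq (t + d) n <= ((t + d) / t * exp (d * (ln 2 - ln t))) * pseq t n.
Proof.
  intros Ht Hd Hn Htn.
  rewrite !pseq_exp by (auto; lra).
  assert (HN : 1 <= INR n) by (apply (le_INR 1); auto).
  pose proof (Hs_diff n t d Ht Hd).
  assert (ln (INR n + t) <= ln 2 + ln (INR n)).
  { rewrite <- ln_mult by lra. apply ln_le; lra. }
  assert (Hexp : exp (Hs n (t + d) - (t + d) * ln (INR n)) <=
          exp (Hs n t - t * ln (INR n)) * exp (d * (ln 2 - ln t))).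
  { rewrite <- exp_plus. destruct (Req_dec (Hs n (t + d) - (t + d) * ln (INR n))
          (Hs n t - t * ln (INR n) + d * (ln 2 - ln t))) as [E|E].
    - rewrite E; lra.
    - left. apply exp_increasing. nra. }
  replace ((t + d) / t * exp (d * (ln 2 - ln t)) * (t * exp (Hs n t - t * ln (INR n))))
    with ((t + d) * (exp (Hs n t - t * ln (INR n)) * exp (d * (ln 2 - ln t)))) by (field; lra).
  apply Rmult_le_compat_l; lra.
Qed.

Lemma rg_ratio t d : 0 < t -> 0 < d ->
  rgamma (t + d) <= ((t + d) / t * exp (d * (ln 2 - ln t))) * rgamma t.
Proof.
  intros Ht Hd.
  destruct (rg_lim (t + d) ltac:(lra)) as [L1 _].
  destruct (rg_lim t Ht) as [L2 _].
  set (c := (t + d) / t * exp (d * (ln 2 - ln t))).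
  assert (L3 : is_lim_seq (fun n => c * pseq t n) (c * rgamma t)).
  { apply is_lim_seq_mult'. apply is_lim_seq_const. exact L2. }
  pose proof (proj2 (is_lim_seq_spec INR p_infty) is_lim_seq_INR t) as [N HN].
  assert (Rbar_le (rgamma (t + d)) (c * rgamma t)).
  { apply (is_lim_seq_le_loc (pseq (t + d)) (fun n => c * pseq t n)); auto.
    exists (S N). intros n Hn. apply pseq_ratio; auto. lia.
    left. apply HN. lia. }
  exact H.
Qed.

Definition Q (s a : R) := gamma_ratio (1 + s) (1 + s - a).

Lemma Q_eq s a : 0 < 1 + s -> Q s a = rgamma (1 + s - a) / rgamma (1 + s).
Proof.
  intro H. unfold Q, gamma_ratio. destruct (Req_EM_T (rgamma (1 + s)) 0) as [E|E]; auto.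
  pose proof (proj2 (rg_lim _ H)). lra.
Qed.

Lemma K2 a A : 0 < A -> a < A -> forall eps, 0 < eps ->
  exists T, forall s, T <= s -> 0 < Q s A /\ Rabs (Q s a) <= eps * Q s A.
Proof.
  intros HA HaA eps Heps.
  set (d := A - a).
  set (Y := Rmax (Rmax d 1) (exp (ln 2 - ln (eps / 2) / d))).
  exists (Y + A - 1). intros s Hs.
  assert (Hd : 0 < d) by (unfold d; lra).
  assert (HY1 : d <= Y /\ 1 <= Y) by (unfold Y; split;
     [eapply Rle_trans; [apply Rmax_l|apply Rmax_l] | eapply Rle_trans; [apply Rmax_r|apply Rmax_l]]).
  assert (HY2 : exp (ln 2 - ln (eps / 2) / d) <= Y) by (unfold Y; apply Rmax_r).
  set (y := 1 + s - A).
  assert (Hy : Y <= y) by (unfold y; lra).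
  assert (H1s : 0 < 1 + s) by (unfold y in *; lra).
  destruct (rg_lim _ H1s) as [_ P1].
  destruct (rg_lim y ltac:(lra)) as [_ Py].
  assert (Ey : 1 + s - a = y + d) by (unfold y, d; ring).
  assert (Hyd : 0 < y + d) by lra.
  destruct (rg_lim (y + d) Hyd) as [_ Pyd].
  rewrite !Q_eq by auto. fold y. rewrite Ey.
  split. { apply Rdiv_lt_0_compat; auto. }
  rewrite Rabs_pos_eq by (left; apply Rdiv_lt_0_compat; auto).
  pose proof (rg_ratio y d ltac:(lra) Hd) as R.
  assert (C1 : (y + d) / y <= 2).
  { apply (Rmult_le_reg_r y). lra. unfold Rdiv. rewrite Rmult_assoc, Rinv_l by lra. lra. }
  assert (C2 : exp (d * (ln 2 - ln y)) <= eps / 2).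
  { rewrite <- (exp_ln (eps / 2)) by lra.
    assert (ln 2 - ln (eps / 2) / d <= ln y).
    { rewrite <- (ln_exp (ln 2 - ln (eps / 2) / d)). apply ln_le. apply exp_pos. lra. }
    destruct (Req_dec (d * (ln 2 - ln y)) (ln (eps / 2))) as [E|E]; [rewrite E; lra|].
    left. apply exp_increasing.
    assert (ln 2 - ln (eps / 2) / d = (d * ln 2 - ln (eps/2)) / d) by (field; lra).
    rewrite H0 in H.
    assert (d * ln 2 - ln (eps / 2) <= d * ln y).
    { apply (Rmult_le_compat_l d) in H; [|lra]. unfold Rdiv in H.
      rewrite <- Rmult_assoc, (Rmult_comm d), Rmult_assoc, Rinv_r, Rmult_1_r in H by lra. exact H. }
    lra. }
  assert (C : (y + d) / y * exp (d * (ln 2 - ln y)) <= eps).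
  { assert (0 <= (y + d) / y) by (left; apply Rdiv_lt_0_compat; lra).
    pose proof (exp_pos (d * (ln 2 - ln y))).
    apply Rle_trans with (2 * (eps / 2)); [|lra].
    apply Rmult_le_compat; lra. }
  unfold Rdiv. rewrite <- Rmult_assoc. apply Rmult_le_compat_r.
  { left. apply Rinv_0_lt_compat. auto. }
  apply Rle_trans with ((y + d) / y * exp (d * (ln 2 - ln y)) * rgamma y); auto.
  apply Rmult_le_compat_r; lra.
Qed.

Lemma K1 A : 0 < A -> forall M, exists T, forall s, T <= s -> M <= Q s A.
Proof.
  intros HA M.
  destruct (K2 0 A HA HA (/ (Rabs M + 1)) ltac:(apply Rinv_0_lt_compat; pose proof (Rabs_pos M); lra)) as [T HT].
  exists (Rmax T 0). intros s Hs.
  destruct (HT s ltac:(eapply Rle_trans; [apply Rmax_l|exact Hs])) as [P1 P2].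
  assert (H1 : 0 < 1 + s) by (pose proof (Rmax_r T 0); lra).
  rewrite (Q_eq s 0 H1) in P2. rewrite Rminus_0_r in P2.
  pose proof (proj2 (rg_lim _ H1)).
  rewrite Rdiv_diag in P2 by lra. rewrite Rabs_R1 in P2.
  pose proof (Rabs_pos M). pose proof (Rle_abs M).
  apply (Rmult_le_compat_l (Rabs M + 1)) in P2; [|lra].
  rewrite <- Rmult_assoc, Rinv_r, Rmult_1_l in P2 by lra. lra.
Qed.

Definition Fl (l : list (R * R)) (s : R) : R :=
  fold_right (fun p acc => fst p * Q s (snd p) + acc) 0 l.

Lemma Fl_app l1 l2 s : Fl (l1 ++ l2) s = Fl l1 s + Fl l2 s.
Proof. induction l1 as [|p l1 IH]; simpl; [ring|]. unfold Fl in *. rewrite IH. ring. Qed.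

Lemma char_Fl m d alpha s :
  char_lhs m d alpha s = Fl (map (fun i => (d i, alpha i)) (seq 0 m)) s.
Proof.
  unfold char_lhs. induction m as [|m IH]; [reflexivity|].
  rewrite seq_S, map_app, Fl_app. cbn [sum_upto]. rewrite IH. simpl. unfold Q. ring.
Qed.

Lemma small_l A : 0 < A -> forall r, (forall p, In p r -> snd p < A) ->
  forall eps, 0 < eps -> exists T, forall s, T <= s -> Rabs (Fl r s) <= eps * Q s A.
Proof.
  intros HA r. induction r as [|[d a] r IH]; intros Hr eps Heps.
  - destruct (K2 (A - 1) A HA ltac:(lra) 1 ltac:(lra)) as [T HT].
    exists T. intros s Hs. simpl. rewrite Rabs_R0. destruct (HT s Hs). nra.
  - destruct (IH (fun p Hp => Hr p (or_intror Hp)) (eps / 2) ltac:(lra)) as [T1 H1].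
    assert (Ha : a < A) by (apply (Hr (d, a)); left; auto).
    pose proof (Rabs_pos d).
    set (e' := eps / (2 * (Rabs d + 1))).
    assert (He' : 0 < e') by (unfold e'; apply Rdiv_lt_0_compat; lra).
    destruct (K2 a A HA Ha e' He') as [T2 H2].
    exists (Rmax T1 T2). intros s Hs.
    destruct (H2 s ltac:(eapply Rle_trans; [apply Rmax_r|exact Hs])) as [PA P2].
    specialize (H1 s ltac:(eapply Rle_trans; [apply Rmax_l|exact Hs])).
    change (Fl ((d, a) :: r) s) with (d * Q s a + Fl r s).
    eapply Rle_trans. apply Rabs_triang. rewrite Rabs_mult.
    assert (Rabs d * Rabs (Q s a) <= Rabs d * (e' * Q s A)) by (apply Rmult_le_compat_l; auto).
    assert (Rabs d * e' <= eps / 2).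
    { unfold e'. apply (Rmult_le_reg_r (2 * (Rabs d + 1))). lra.
      field_simplify; lra. }
    assert (Rabs d * (e' * Q s A) <= eps / 2 * Q s A).
    { rewrite <- Rmult_assoc. apply Rmult_le_compat_r; lra. }
    lra.
Qed.

Definition neqA (A : R) (p : R * R) : bool := if Req_EM_T (snd p) A then false else true.

Definition sumA (A : R) (l : list (R * R)) : R :=
  fold_right (fun p acc => (if Req_EM_T (snd p) A then fst p else 0) + acc) 0 l.

Lemma Fl_split A l s : Fl l s = sumA A l * Q s A + Fl (filter (neqA A) l) s.
Proof.
  induction l as [|p l IH]; simpl; [ring|].
  unfold neqA at 1. destruct (Req_EM_T (snd p) A) as [E|E]; simpl.
  - unfold Fl in *. rewrite IH, E. ring.
  - unfold Fl in *. rewrite IH. ring.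
Qed.

Lemma filter_len_lt {T} (f : T -> bool) l q : In q l -> f q = false ->
  (length (filter f l) < length l)%nat.
Proof.
  induction l as [|x l IH]; simpl; [tauto|].
  intros [E|Hin] Hf.
  - subst. rewrite Hf. pose proof (filter_length_le f l). lia.
  - specialize (IH Hin Hf). destruct (f x); simpl; lia.
Qed.

Lemma exists_max (l : list (R * R)) : l <> nil -> exists q, In q l /\ forall p, In p l -> snd p <= snd q.
Proof.
  induction l as [|x l IH]; [tauto|]. intros _.
  destruct l as [|y l'].
  - exists x. split; [left; auto|]. intros p [E|[]]. subst; lra.
  - destruct (IH ltac:(discriminate)) as [q [Hq Hm]].
    destruct (Rle_dec (snd x) (snd q)).
    + exists q. split; [right; auto|]. intros p [E|Hp]; [subst; auto|auto].
    + exists x. split; [left; auto|]. intros p [E|Hp]; [subst; lra|].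
      specialize (Hm p Hp). lra.
Qed.

Lemma main_l n : forall l, (length l <= n)%nat -> (forall p, In p l -> 0 < snd p) ->
  (forall s, Fl l s = 0) \/ (forall M, exists T, forall s, T <= s -> M <= Rabs (Fl l s)).
Proof.
  induction n as [|n IH]; intros l Hlen Hpos.
  - destruct l; [left; intros; reflexivity | simpl in Hlen; lia].
  - destruct l as [|x l0] eqn:El; [left; intros; reflexivity|].
    rewrite <- El in *.
    destruct (exists_max l ltac:(rewrite El; discriminate)) as [q [Hq Hm]].
    set (A := snd q).
    assert (HA : 0 < A) by (apply Hpos; auto).
    set (r := filter (neqA A) l).
    assert (Hr_len : (length r <= n)%nat).
    { pose proof (filter_len_lt (neqA A) l q Hq ltac:(unfold neqA; destruct (Req_EM_T (snd q) A); [reflexivity|exfalso; auto])).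
      unfold r. lia. }
    assert (Hr_in : forall p, In p r -> 0 < snd p /\ snd p < A).
    { intros p Hp. unfold r in Hp. apply filter_In in Hp as [Hp Hf].
      split; [auto|]. unfold neqA in Hf. destruct (Req_EM_T (snd p) A); [discriminate|].
      specialize (Hm p Hp). fold A in Hm. lra. }
    set (c := sumA A l).
    destruct (Req_dec c 0) as [Hc|Hc].
    + destruct (IH r Hr_len (fun p Hp => proj1 (Hr_in p Hp))) as [L|L].
      * left. intro s. rewrite (Fl_split A). fold r c. rewrite Hc, L. ring.
      * right. intros M. destruct (L M) as [T HT]. exists T. intros s Hs.
        rewrite (Fl_split A). fold r c. rewrite Hc, Rmult_0_l, Rplus_0_l. auto.
    + right. intros M.
      assert (Hca : 0 < Rabs c) by (apply Rabs_pos_lt; auto).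
      destruct (small_l A HA r (fun p Hp => proj2 (Hr_in p Hp)) (Rabs c / 2) ltac:(lra)) as [T1 H1].
      destruct (K1 A HA (2 * Rabs M / Rabs c)) as [T2 H2].
      exists (Rmax T1 T2). intros s Hs.
      specialize (H1 s ltac:(eapply Rle_trans; [apply Rmax_l|exact Hs])).
      specialize (H2 s ltac:(eapply Rle_trans; [apply Rmax_r|exact Hs])).
      rewrite (Fl_split A). fold r c.
      assert (E2 : 2 * Rabs M / Rabs c * Rabs c = 2 * Rabs M) by (field; lra).
      assert (H3 : 2 * Rabs M <= Q s A * Rabs c).
      { rewrite <- E2. apply Rmult_le_compat_r; lra. }
      pose proof (Rabs_triang_inv (c * Q s A) (- Fl r s)) as T3.
      rewrite Rabs_Ropp, Rabs_mult in T3.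
      replace (c * Q s A - - Fl r s) with (c * Q s A + Fl r s) in T3 by ring.
      assert (0 <= Q s A).
      { pose proof (Rabs_pos M). nra. }
      rewrite (Rabs_pos_eq (Q s A)) in T3 by auto.
      pose proof (Rle_abs M). nra.
Qed.

Theorem lemma2p1 (m : nat) (d alpha : nat -> R) (beta nu g c0 : R) :
  (forall i : nat, (i < m)%nat -> 0 < alpha i) ->
  0 < beta ->
  char_lhs m d alpha g = nu ^ 2 ->
  (forall k : nat, (1 <= k)%nat -> char_lhs m d alpha (g + beta * INR k) <> nu ^ 2) ->
  forall x : R, 0 < x ->
    ex_series (fun n => c0 * bessel_term m d alpha beta nu g x n).
Proof.
  intros Halpha Hbeta Hg Hk x Hx.
  set (l := map (fun i => (d i, alpha i)) (seq 0 m)).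
  assert (Hpos : forall p, In p l -> 0 < snd p).
  { intros p Hp. unfold l in Hp. apply in_map_iff in Hp as [i [E Hi]]. subst p.
    apply in_seq in Hi. simpl. apply Halpha. lia. }
  destruct (main_l (length l) l (le_n _) Hpos) as [Z|G].
  { exfalso. apply (Hk 1%nat (le_n _)). rewrite char_Fl. fold l. rewrite Z.
    rewrite <- Hg, char_Fl. fold l. rewrite Z. reflexivity. }
  set (D := fun k => char_lhs m d alpha (g + beta * INR k) - nu ^ 2).
  assert (HD : forall k, (1 <= k)%nat -> D k <> 0).
  { intros k Hk1. unfold D. specialize (Hk k Hk1). lra. }
  assert (HP : forall n, prod_1n n D <> 0).
  { induction n as [|n IH]; simpl; [lra|]. apply Rmult_integral_contrapositive. split; auto.
    apply HD. lia. }
  set (b := fun n => bessel_term m d alpha beta nu g x n).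
  assert (Hb : forall n, b n = (-1) ^ n * Rpower x (g + beta * INR n) / prod_1n n D).
  { intro n. reflexivity. }
  assert (Hbnz : forall n, b n <> 0).
  { intro n. rewrite Hb. unfold Rdiv.
    assert ((-1) ^ n <> 0) by (apply pow_nonzero; lra).
    assert (Rpower x (g + beta * INR n) <> 0) by (unfold Rpower; apply Rgt_not_eq, exp_pos).
    assert (/ prod_1n n D <> 0) by (apply Rinv_neq_0_compat, HP).
    repeat apply Rmult_integral_contrapositive_currified; auto. }
  assert (Hratio : forall n, Rabs (b (S n) / b n) = Rpower x beta / Rabs (D (S n))).
  { intro n. rewrite !Hb.
    assert (E1 : Rpower x (g + beta * INR (S n)) = Rpower x (g + beta * INR n) * Rpower x beta).
    { rewrite <- Rpower_plus. f_equal. rewrite S_INR. ring. }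
    rewrite E1. cbn [pow prod_1n].
    pose proof (HP n). pose proof (HD (S n) ltac:(lia)).
    assert (Rpower x (g + beta * INR n) <> 0) by (unfold Rpower; apply Rgt_not_eq, exp_pos).
    assert ((-1) ^ n <> 0) by (apply pow_nonzero; lra).
    replace (-1 * (-1) ^ n * (Rpower x (g + beta * INR n) * Rpower x beta) / (prod_1n n D * D (S n)) /
      ((-1) ^ n * Rpower x (g + beta * INR n) / prod_1n n D)) with (- (Rpower x beta / D (S n))) by (field; auto).
    rewrite Rabs_Ropp. unfold Rdiv. rewrite Rabs_mult, Rabs_inv.
    rewrite (Rabs_pos_eq (Rpower x beta)); [reflexivity|]. unfold Rpower; left; apply exp_pos. }
  assert (Hlim : is_lim_seq (fun n => Rabs (b (S n) / b n)) 0).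
  { apply is_lim_seq_spec. intro eps.
    set (xb := Rpower x beta).
    assert (Hxb : 0 < xb) by (unfold xb, Rpower; apply exp_pos).
    pose proof (cond_pos eps) as Heps.
    destruct (G (nu ^ 2 + xb / eps + 1)) as [T HT].
    pose proof (proj2 (is_lim_seq_spec INR p_infty) is_lim_seq_INR ((T - g) / beta)) as [N HN].
    exists N. intros n Hn. rewrite Hratio. fold xb. rewrite Rminus_0_r.
    specialize (HN n Hn).
    assert (Hs : T <= g + beta * INR (S n)).
    { rewrite S_INR. apply (Rmult_lt_compat_l beta) in HN; auto.
      replace (beta * ((T - g) / beta)) with (T - g) in HN by (field; lra). lra. }
    specialize (HT _ Hs). unfold l in HT. rewrite <- char_Fl in HT.
    assert (HDa : xb / eps + 1 <= Rabs (D (S n))).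
    { unfold D. pose proof (Rabs_triang_inv (char_lhs m d alpha (g + beta * INR (S n))) (nu ^ 2)).
      rewrite (Rabs_pos_eq (nu ^ 2)) in H by (apply pow2_ge_0). lra. }
    assert (0 < xb / eps) by (apply Rdiv_lt_0_compat; auto).
    rewrite Rabs_pos_eq by (left; apply Rdiv_lt_0_compat; lra).
    apply (Rmult_lt_reg_r (Rabs (D (S n)))). lra.
    unfold Rdiv. rewrite Rmult_assoc, Rinv_l by lra. rewrite Rmult_1_r.
    apply Rlt_le_trans with (eps * (xb / eps + 1)).
    { replace (eps * (xb / eps + 1)) with (xb + eps) by (field; lra). lra. }
    apply Rmult_le_compat_l; lra. }
  assert (Hser : ex_series b).
  { apply ex_series_Rabs. apply (ex_series_DAlembert b 0); auto. lra. }
  apply (ex_series_ext (fun n => scal c0 (b n))). { intro n. reflexivity. }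
  apply (@ex_series_scal_l R_AbsRing R_NormedModule). exact Hser.
Qed.
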